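(* Let $b,c\in\mathbb{R}$ with $b,c>0$ and $b\neq c$, and let $a=(a_0,a_1,a_2,a_3)=(0,b,c,0)$. Then every tropical recurrent minimal sequence satisfying $a$ is periodic if and only if either $b<c\le 2b$ or $c<b\le 2c$. In this case every tropical recurrent minimal sequence satisfying $a$ is periodic with period $3$.
   Context: Here $n=3$. A tropical recurrent sequence is a sequence $y=(y_j)_{j\in\mathbb{Z}}$ with $y_j\in\mathbb{R}\cup\{\infty\}$, not all equal to $\infty$. It satisfies $a$ if for every $k\in\mathbb{Z}$ the minimum $\min_{0\le i\le 3}\{a_i+y_{i+k}\}$ is attained for at least two different indices $i$. It is minimal if for every $j\in\mathbb{Z}$ there exists $k$ with $j-3\le k\le j$ such that $a_{j-k}+y_j=\min_{0\le i\le 3}\{a_i+y_{i+k}\}$. The sequence is periodic with period $d\ge1$ if $y_{j+d}=y_j$ for all $j$, and periodic if it has some period $d\ge 1$. *)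

(* Defs.v *)
From Stdlib Require Import Reals ZArith Lia Lra.
Open Scope R_scope.

(* Elements of R ∪ {∞}: Some x = x, None = ∞. *)
Definition Rinf := option R.

Definition le_inf (u v : Rinf) : Prop :=
  match u, v with
  | _, None => True
  | None, Some _ => False
  | Some x, Some y => x <= y
  end.

Definition add_inf (a : R) (u : Rinf) : Rinf :=
  match u with
  | Some x => Some (a + x)
  | None => None
  end.

Definition ord : nat := 3%nat.

Definition trop_seq (y : Z -> Rinf) : Prop := exists j : Z, y j <> None.

Definition term (a : nat -> R) (y : Z -> Rinf) (k : Z) (i : nat) : Rinf :=
  add_inf (a i) (y (Z.of_nat i + k)%Z).

Definition attains_min (a : nat -> R) (y : Z -> Rinf) (k : Z) (i : nat) : Prop :=
  (i <= ord)%nat /\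
  forall i' : nat, (i' <= ord)%nat -> le_inf (term a y k i) (term a y k i').

Definition satisfies (a : nat -> R) (y : Z -> Rinf) : Prop :=
  forall k : Z, exists i1 i2 : nat,
    i1 <> i2 /\ attains_min a y k i1 /\ attains_min a y k i2.

(* Minimality: for every j there is k with j-n <= k <= j such that
   a_{j-k} + y_j = min_{0<=i<=n} (a_i + y_{i+k}); note a_{j-k} + y_j is
   the term with index i = j-k at shift k. *)
Definition minimal (a : nat -> R) (y : Z -> Rinf) : Prop :=
  forall j : Z, exists k : Z,
    (j - Z.of_nat ord <= k <= j)%Z /\ attains_min a y k (Z.to_nat (j - k)).

Definition periodic_with (d : nat) (y : Z -> Rinf) : Prop :=
  (1 <= d)%nat /\ forall j : Z, y (j + Z.of_nat d)%Z = y j.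

Definition periodic (y : Z -> Rinf) : Prop := exists d : nat, periodic_with d y.

Definition coef (b c : R) (i : nat) : R :=
  match i with
  | 1%nat => b
  | 2%nat => c
  | _ => 0
  end.

(* Main.v *)
Require Import Defs.
From Stdlib Require Import Reals ZArith Lia Lra.
Open Scope R_scope.

Definition W (b c p q r s : R) : Prop :=
  let A := p in let B := b + q in let C := c + r in let D := s in
  (A = B /\ A <= C /\ A <= D) \/ (A = C /\ A <= B /\ A <= D) \/ (A = D /\ A <= B /\ A <= C) \/
  (B = C /\ B <= A /\ B <= D) \/ (B = D /\ B <= A /\ B <= C) \/ (C = D /\ C <= A /\ C <= B).
Definition M (b c xm3 xm2 xm1 x x1 x2 x3 : R) : Prop :=
  (x <= b + x1 /\ x <= c + x2 /\ x <= x3) \/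
  (b + x <= xm1 /\ b + x <= c + x1 /\ b + x <= x2) \/
  (c + x <= xm2 /\ c + x <= b + xm1 /\ c + x <= x1) \/
  (x <= xm3 /\ x <= b + xm2 /\ x <= c + xm1).
Definition cond (b c : R) := 0 < b /\ 0 < c /\ ((b < c /\ c <= 2 * b) \/ (c < b /\ b <= 2 * c)).

Lemma key_lt b c x0 x1 x2 x3 x4 x5 x6 : cond b c ->
  W b c x0 x1 x2 x3 -> W b c x1 x2 x3 x4 -> W b c x2 x3 x4 x5 ->
  M b c x0 x1 x2 x3 x4 x5 x6 -> x0 < x3 -> False.
Proof.
  unfold cond, W, M; intros [hb [hc hh]] H1 H2 H3 H4 H.
  destruct hh as [[? ?]|[? ?]];
  destruct H4 as [?|[?|[?|?]]]; try lra;
  destruct H1 as [?|[?|[?|[?|[?|?]]]]]; try lra;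
  destruct H2 as [?|[?|[?|[?|[?|?]]]]]; try lra;
  destruct H3 as [?|[?|[?|[?|[?|?]]]]]; lra.
Qed.

Lemma key_gt b c x0 x1 x2 x3 x4 x5 x6 : cond b c ->
  W b c x1 x2 x3 x4 -> W b c x2 x3 x4 x5 -> W b c x3 x4 x5 x6 ->
  M b c x0 x1 x2 x3 x4 x5 x6 -> x6 < x3 -> False.
Proof.
  unfold cond, W, M; intros [hb [hc hh]] H1 H2 H3 H4 H.
  destruct hh as [[? ?]|[? ?]];
  destruct H4 as [?|[?|[?|?]]]; try lra;
  destruct H3 as [?|[?|[?|[?|[?|?]]]]]; try lra;
  destruct H2 as [?|[?|[?|[?|[?|?]]]]]; try lra;
  destruct H1 as [?|[?|[?|[?|[?|?]]]]]; lra.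
Qed.

Definition allN (y : Z -> Rinf) (k : Z) : Prop :=
  forall i : nat, (i <= 3)%nat -> y (Z.of_nat i + k)%Z = None.

Lemma le_inf_None_l u : le_inf None u -> u = None.
Proof. destruct u; simpl; tauto. Qed.

Lemma term_None' a y k i : term a y k i = None -> y (Z.of_nat i + k)%Z = None.
Proof. unfold term; destruct (y _); simpl; congruence. Qed.

Lemma attains_None a y k i : attains_min a y k i -> term a y k i = None -> allN y k.
Proof.
  intros [hi H] hN i' hi'. apply (term_None' a). specialize (H i' hi').
  rewrite hN in H. now apply le_inf_None_l.
Qed.

Lemma stepL a y k : satisfies a y -> allN y k -> allN y (k - 1).
Proof.
  intros Sa A.
  assert (E : y (k - 1)%Z = None).
  { destruct (Sa (k - 1)%Z) as [i1 [i2 [hne [A1 A2]]]].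
    assert (exists i, (1 <= i <= 3)%nat /\ attains_min a y (k - 1) i) as [i [hi Ai]].
    { destruct i1 as [|i1].
      - exists i2. split; [destruct A2 as [h2 _]; unfold ord in h2; lia | exact A2].
      - exists (S i1). split; [destruct A1 as [h1 _]; unfold ord in h1; lia | exact A1]. }
    assert (T : term a y (k - 1) i = None).
    { unfold term. replace (Z.of_nat i + (k - 1))%Z with (Z.of_nat (i - 1) + k)%Z by lia.
      rewrite A by lia. reflexivity. }
    destruct Ai as [_ H]. specialize (H 0%nat ltac:(unfold ord; lia)).
    rewrite T in H. apply le_inf_None_l in H. apply term_None' in H. exact H. }
  intros i hi. destruct i as [|i].
  - exact E.
  - replace (Z.of_nat (S i) + (k - 1))%Z with (Z.of_nat i + k)%Z by lia. apply A; lia.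
Qed.

Lemma stepR a y k : satisfies a y -> allN y k -> allN y (k + 1).
Proof.
  intros Sa A.
  assert (E : y (k + 4)%Z = None).
  { destruct (Sa (k + 1)%Z) as [i1 [i2 [hne [A1 A2]]]].
    assert (exists i, (i <= 2)%nat /\ attains_min a y (k + 1) i) as [i [hi Ai]].
    { destruct (Nat.eq_dec i1 3).
      - exists i2. split; [destruct A2 as [h2 _]; unfold ord in h2; lia | exact A2].
      - exists i1. split; [destruct A1 as [h1 _]; unfold ord in h1; lia | exact A1]. }
    assert (T : term a y (k + 1) i = None).
    { unfold term. replace (Z.of_nat i + (k + 1))%Z with (Z.of_nat (i + 1) + k)%Z by lia.
      rewrite A by lia. reflexivity. }
    destruct Ai as [_ H]. specialize (H 3%nat ltac:(unfold ord; lia)).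
    rewrite T in H. apply le_inf_None_l in H. apply term_None' in H.
    replace (Z.of_nat 3 + (k + 1))%Z with (k + 4)%Z in H by lia. exact H. }
  intros i hi. destruct (Nat.eq_dec i 3).
  - subst. replace (Z.of_nat 3 + (k + 1))%Z with (k + 4)%Z by lia. exact E.
  - replace (Z.of_nat i + (k + 1))%Z with (Z.of_nat (i + 1) + k)%Z by lia. apply A; lia.
Qed.

Lemma spread a y k : satisfies a y -> allN y k ->
  forall n : nat, allN y (k - Z.of_nat n) /\ allN y (k + Z.of_nat n).
Proof.
  intros Sa A n. induction n as [|n [IH1 IH2]].
  - simpl. rewrite Z.sub_0_r, Z.add_0_r. auto.
  - split.
    + replace (k - Z.of_nat (S n))%Z with (k - Z.of_nat n - 1)%Z by lia. now apply (stepL a).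
    + replace (k + Z.of_nat (S n))%Z with (k + Z.of_nat n + 1)%Z by lia. now apply (stepR a).
Qed.

Lemma all_some a y : trop_seq y -> satisfies a y -> minimal a y -> forall j, y j <> None.
Proof.
  intros [j0 T] Sa Mi j hj.
  destruct (Mi j) as [k [hk Hk]].
  assert (A : allN y k).
  { apply (attains_None a y k _ Hk). unfold term.
    rewrite Z2Nat.id by lia. replace (j - k + k)%Z with (j)%Z by lia. rewrite hj. reflexivity. }
  destruct (spread a y k Sa A (Z.to_nat (Z.abs (j0 - k)))) as [B1 B2].
  destruct (Z_le_gt_dec k j0).
  - specialize (B2 0%nat ltac:(lia)). simpl in B2.
    replace (k + Z.of_nat (Z.to_nat (Z.abs (j0 - k))))%Z with (j0)%Z in B2 by lia. auto.
  - specialize (B1 0%nat ltac:(lia)). simpl in B1.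
    replace (k - Z.of_nat (Z.to_nat (Z.abs (j0 - k))))%Z with (j0)%Z in B1 by lia. auto.
Qed.

Definition rv (y : Z -> Rinf) (j : Z) : R := match y j with Some r => r | None => 0 end.

Lemma rv_spec y : (forall j, y j <> None) -> forall j, y j = Some (rv y j).
Proof. intros H j. unfold rv. destruct (y j) eqn:E; [reflexivity| exfalso; exact (H j E)]. Qed.

Lemma am_at a y k i : attains_min a y k i -> (forall j, y j <> None) ->
  forall i' p p', (i' <= 3)%nat -> p = (Z.of_nat i + k)%Z -> p' = (Z.of_nat i' + k)%Z ->
  a i + rv y p <= a i' + rv y p'.
Proof.
  intros [hi H] Hs i' p p' hi' Ep Ep'. specialize (H i' hi').
  assert (E1 : term a y k i = Some (a i + rv y p)).
  { unfold term. subst p. rewrite (rv_spec y Hs (Z.of_nat i + k)). reflexivity. }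
  assert (E2 : term a y k i' = Some (a i' + rv y p')).
  { unfold term. subst p'. rewrite (rv_spec y Hs (Z.of_nat i' + k)). reflexivity. }
  rewrite E1, E2 in H. exact H.
Qed.

Ltac pick6 := unfold W;
  first [ left; repeat split; lra
        | right; left; repeat split; lra
        | right; right; left; repeat split; lra
        | right; right; right; left; repeat split; lra
        | right; right; right; right; left; repeat split; lra
        | right; right; right; right; right; repeat split; lra ].
Ltac pick4 := unfold M;
  first [ left; repeat split; lra
        | right; left; repeat split; lra
        | right; right; left; repeat split; lra
        | right; right; right; repeat split; lra ].

Ltac gen A k i :=
  pose proof (A 0%nat (k + Z.of_nat i)%Z k ltac:(lia) ltac:(lia) ltac:(lia));
  pose proof (A 1%nat (k + Z.of_nat i)%Z (k + 1)%Z ltac:(lia) ltac:(lia) ltac:(lia));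
  pose proof (A 2%nat (k + Z.of_nat i)%Z (k + 2)%Z ltac:(lia) ltac:(lia) ltac:(lia));
  pose proof (A 3%nat (k + Z.of_nat i)%Z (k + 3)%Z ltac:(lia) ltac:(lia) ltac:(lia)).

Lemma winZ b c y : satisfies (coef b c) y -> (forall j, y j <> None) ->
  forall k p q r s, p = k -> q = (k + 1)%Z -> r = (k + 2)%Z -> s = (k + 3)%Z ->
  W b c (rv y p) (rv y q) (rv y r) (rv y s).
Proof.
  intros Sa Hs k p q r s -> -> -> ->.
  destruct (Sa k) as [i1 [i2 [hne [A1 A2]]]].
  pose proof (proj1 A1) as h1. pose proof (proj1 A2) as h2. unfold ord in h1, h2.
  pose proof (am_at _ _ _ _ A1 Hs) as B1. pose proof (am_at _ _ _ _ A2 Hs) as B2.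
  destruct i1 as [|[|[|[|i1]]]]; try lia; destruct i2 as [|[|[|[|i2]]]]; try lia;
  lazymatch type of A1 with attains_min _ _ _ ?n => gen B1 k n end;
  lazymatch type of A2 with attains_min _ _ _ ?n => gen B2 k n end; simpl Z.of_nat in *; rewrite ?Z.add_0_r in *; simpl coef in *; pick6.
Qed.

Ltac genm B d p1 p2 p3 i1 i2 i3 :=
  pose proof (B i1 _ p1 ltac:(lia) ltac:(lia) ltac:(lia));
  pose proof (B i2 _ p2 ltac:(lia) ltac:(lia) ltac:(lia));
  pose proof (B i3 _ p3 ltac:(lia) ltac:(lia) ltac:(lia)).

Lemma minZ b c y : minimal (coef b c) y -> (forall j, y j <> None) ->
  forall j pm3 pm2 pm1 p0 p1 p2 p3,
  pm3 = (j - 3)%Z -> pm2 = (j - 2)%Z -> pm1 = (j - 1)%Z -> p0 = j ->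
  p1 = (j + 1)%Z -> p2 = (j + 2)%Z -> p3 = (j + 3)%Z ->
  M b c (rv y pm3) (rv y pm2) (rv y pm1) (rv y p0) (rv y p1) (rv y p2) (rv y p3).
Proof.
  intros Mi Hs j pm3 pm2 pm1 p0 p1 p2 p3 -> -> -> -> -> -> ->.
  destruct (Mi j) as [k [hk A]]. unfold ord in hk.
  pose proof (am_at _ _ _ _ A Hs) as B.
  assert (k = j \/ k = (j-1)%Z \/ k = (j-2)%Z \/ k = (j-3)%Z)%Z as [E|[E|[E|E]]] by lia; subst k.
  - replace (Z.to_nat (j - j)) with 0%nat in B by lia.
    pose proof (B 1%nat j (j+1)%Z ltac:(lia) ltac:(lia) ltac:(lia)).
    pose proof (B 2%nat j (j+2)%Z ltac:(lia) ltac:(lia) ltac:(lia)).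
    pose proof (B 3%nat j (j+3)%Z ltac:(lia) ltac:(lia) ltac:(lia)).
    simpl coef in *; pick4.
  - replace (Z.to_nat (j - (j - 1))) with 1%nat in B by lia.
    pose proof (B 0%nat j (j-1)%Z ltac:(lia) ltac:(lia) ltac:(lia)).
    pose proof (B 2%nat j (j+1)%Z ltac:(lia) ltac:(lia) ltac:(lia)).
    pose proof (B 3%nat j (j+2)%Z ltac:(lia) ltac:(lia) ltac:(lia)).
    simpl coef in *; pick4.
  - replace (Z.to_nat (j - (j - 2))) with 2%nat in B by lia.
    pose proof (B 0%nat j (j-2)%Z ltac:(lia) ltac:(lia) ltac:(lia)).
    pose proof (B 1%nat j (j-1)%Z ltac:(lia) ltac:(lia) ltac:(lia)).
    pose proof (B 3%nat j (j+1)%Z ltac:(lia) ltac:(lia) ltac:(lia)).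
    simpl coef in *; pick4.
  - replace (Z.to_nat (j - (j - 3))) with 3%nat in B by lia.
    pose proof (B 0%nat j (j-3)%Z ltac:(lia) ltac:(lia) ltac:(lia)).
    pose proof (B 1%nat j (j-2)%Z ltac:(lia) ltac:(lia) ltac:(lia)).
    pose proof (B 2%nat j (j-1)%Z ltac:(lia) ltac:(lia) ltac:(lia)).
    simpl coef in *; pick4.
Qed.

Lemma per3 b c y : cond b c -> satisfies (coef b c) y -> minimal (coef b c) y ->
  (forall j, y j <> None) -> forall k, rv y (k + 3)%Z = rv y k.
Proof.
  intros hc Sa Mi Hs k.
  destruct (Rtotal_order (rv y k) (rv y (k + 3)%Z)) as [h|[h|h]].
  - exfalso. apply (key_lt b c (rv y k) (rv y (k+1)%Z) (rv y (k+2)%Z) (rv y (k+3)%Z)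
                  (rv y (k+4)%Z) (rv y (k+5)%Z) (rv y (k+6)%Z)); auto.
    + apply (winZ b c y Sa Hs k); lia.
    + apply (winZ b c y Sa Hs (k+1)); lia.
    + apply (winZ b c y Sa Hs (k+2)); lia.
    + apply (minZ b c y Mi Hs (k+3)); lia.
  - auto.
  - exfalso. apply (key_gt b c (rv y (k-3)%Z) (rv y (k-2)%Z) (rv y (k-1)%Z) (rv y k)
                  (rv y (k+1)%Z) (rv y (k+2)%Z) (rv y (k+3)%Z)); auto.
    + apply (winZ b c y Sa Hs (k-2)); lia.
    + apply (winZ b c y Sa Hs (k-1)); lia.
    + apply (winZ b c y Sa Hs k); lia.
    + apply (minZ b c y Mi Hs k); lia.
Qed.

Lemma partA b c : cond b c -> forall y : Z -> Rinf,
  trop_seq y -> satisfies (coef b c) y -> minimal (coef b c) y -> periodic_with 3 y.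
Proof.
  intros hc y T Sa Mi.
  pose proof (all_some _ y T Sa Mi) as Hs.
  split; [lia|]. intro j.
  rewrite (rv_spec y Hs (j + Z.of_nat 3)%Z), (rv_spec y Hs j). f_equal.
  apply (per3 b c y hc Sa Mi Hs j).
Qed.

Lemma am_of b c g k i : (i <= 3)%nat ->
  (forall i', (i' <= 3)%nat -> forall p p', p = (Z.of_nat i + k)%Z -> p' = (Z.of_nat i' + k)%Z ->
     coef b c i + g p <= coef b c i' + g p') ->
  attains_min (coef b c) (fun j => Some (g j)) k i.
Proof.
  intros hi H. split; [exact hi|]. intros i' hi'. unfold term; simpl. apply H; auto.
Qed.

Ltac canonW p k := first [ replace p with k by lia | replace p with (k+1)%Z by lia
  | replace p with (k+2)%Z by lia | replace p with (k+3)%Z by lia ].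
Ltac canonM p j := first [ replace p with (j-3)%Z by lia | replace p with (j-2)%Z by lia
  | replace p with (j-1)%Z by lia | replace p with j by lia | replace p with (j+1)%Z by lia
  | replace p with (j+2)%Z by lia | replace p with (j+3)%Z by lia ].

Lemma W_sat b c g : (forall k, W b c (g k) (g (k+1)%Z) (g (k+2)%Z) (g (k+3)%Z)) ->
  satisfies (coef b c) (fun j => Some (g j)).
Proof.
  intros H k. specialize (H k). unfold W in H.
  destruct H as [H|[H|[H|[H|[H|H]]]]];
  [exists 0%nat, 1%nat | exists 0%nat, 2%nat | exists 0%nat, 3%nat
  | exists 1%nat, 2%nat | exists 1%nat, 3%nat | exists 2%nat, 3%nat];
  (split; [lia|]); split; apply am_of; try lia;
  intros i' hi' p p' Ep Ep';
  (destruct i' as [|[|[|[|i']]]]; [..|lia]); canonW p k; canonW p' k; simpl coef; lra.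
Qed.

Lemma M_min b c g :
  (forall j, M b c (g (j-3)%Z) (g (j-2)%Z) (g (j-1)%Z) (g j) (g (j+1)%Z) (g (j+2)%Z) (g (j+3)%Z)) ->
  minimal (coef b c) (fun j => Some (g j)).
Proof.
  intros H j. specialize (H j). unfold M in H.
  destruct H as [H|[H|[H|H]]];
  [exists j | exists (j-1)%Z | exists (j-2)%Z | exists (j-3)%Z];
  (split; [unfold ord; lia|]);
  [ replace (Z.to_nat (j - j)) with 0%nat by lia
  | replace (Z.to_nat (j - (j-1))) with 1%nat by lia
  | replace (Z.to_nat (j - (j-2))) with 2%nat by lia
  | replace (Z.to_nat (j - (j-3))) with 3%nat by lia ];
  apply am_of; try lia;
  intros i' hi' p p' Ep Ep';
  (destruct i' as [|[|[|[|i']]]]; [..|lia]); canonM p j; canonM p' j; simpl coef; lra.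
Qed.

Lemma W_rev b c p q r s : W c b s r q p -> W b c p q r s.
Proof. unfold W; intros H; destruct H as [H|[H|[H|[H|[H|H]]]]]; pick6. Qed.

Lemma M_rev b c xm3 xm2 xm1 x x1 x2 x3 :
  M c b x3 x2 x1 x xm1 xm2 xm3 -> M b c xm3 xm2 xm1 x x1 x2 x3.
Proof. unfold M; intros H; destruct H as [H|[H|[H|H]]]; pick4. Qed.

Definition gfun (b c : R) (j : Z) : R :=
  if Z.eq_dec j 0 then c else if Z.eq_dec j 1 then c - b else if Z.eq_dec j 3 then c
  else if Z.eq_dec (j mod 3) 0 then 2 * b else if Z.eq_dec (j mod 3) 1 then b else 0.

Ltac zl := solve [Z.div_mod_to_equations; lia].

Lemma g0 b c e : e = 0%Z -> gfun b c e = c.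
Proof. intros; unfold gfun; destruct (Z.eq_dec e 0); [auto|lia]. Qed.
Lemma g1 b c e : e = 1%Z -> gfun b c e = c - b.
Proof. intros; unfold gfun; destruct (Z.eq_dec e 0); [lia|]; destruct (Z.eq_dec e 1); [auto|lia]. Qed.
Lemma g3 b c e : e = 3%Z -> gfun b c e = c.
Proof. intros; unfold gfun; destruct (Z.eq_dec e 0); [lia|]; destruct (Z.eq_dec e 1); [lia|];
  destruct (Z.eq_dec e 3); [auto|lia]. Qed.
Lemma gb0 b c e : e <> 0%Z -> e <> 1%Z -> e <> 3%Z -> (e mod 3 = 0)%Z -> gfun b c e = 2 * b.
Proof. intros; unfold gfun; destruct (Z.eq_dec e 0); [lia|]; destruct (Z.eq_dec e 1); [lia|];
  destruct (Z.eq_dec e 3); [lia|]; destruct (Z.eq_dec (e mod 3) 0); [auto|lia]. Qed.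
Lemma gb1 b c e : e <> 0%Z -> e <> 1%Z -> e <> 3%Z -> (e mod 3 = 1)%Z -> gfun b c e = b.
Proof. intros; unfold gfun; destruct (Z.eq_dec e 0); [lia|]; destruct (Z.eq_dec e 1); [lia|];
  destruct (Z.eq_dec e 3); [lia|]; destruct (Z.eq_dec (e mod 3) 0); [lia|];
  destruct (Z.eq_dec (e mod 3) 1); [auto|lia]. Qed.
Lemma gb2 b c e : e <> 0%Z -> e <> 1%Z -> e <> 3%Z -> (e mod 3 = 2)%Z -> gfun b c e = 0.
Proof. intros; unfold gfun; destruct (Z.eq_dec e 0); [lia|]; destruct (Z.eq_dec e 1); [lia|];
  destruct (Z.eq_dec e 3); [lia|]; destruct (Z.eq_dec (e mod 3) 0); [lia|];
  destruct (Z.eq_dec (e mod 3) 1); [lia|auto]. Qed.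

Ltac gs := repeat match goal with |- context [gfun ?b ?c ?e] =>
  first [ rewrite (g0 b c e) by lia | rewrite (g1 b c e) by lia | rewrite (g3 b c e) by lia
        | rewrite (gb0 b c e) by (try lia; zl) | rewrite (gb1 b c e) by (try lia; zl)
        | rewrite (gb2 b c e) by (try lia; zl) ] end.

Lemma mod3 (k : Z) : (k mod 3 = 0 \/ k mod 3 = 1 \/ k mod 3 = 2)%Z.
Proof. zl. Qed.

Lemma constr b c : 0 < b -> 2 * b < c -> exists g : Z -> R,
  (forall k, W b c (g k) (g (k+1)%Z) (g (k+2)%Z) (g (k+3)%Z)) /\
  (forall j, M b c (g (j-3)%Z) (g (j-2)%Z) (g (j-1)%Z) (g j) (g (j+1)%Z) (g (j+2)%Z) (g (j+3)%Z)) /\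
  (forall d : nat, (1 <= d)%nat -> ~ (forall j, g (j + Z.of_nat d)%Z = g j)).
Proof.
  intros hb hc. exists (gfun b c). split; [|split].
  - intro k.
    assert ((k <= -4 \/ 4 <= k) \/ k = -3 \/ k = -2 \/ k = -1 \/ k = 0 \/ k = 1 \/ k = 2 \/ k = 3)%Z
      as [Hk|[->|[->|[->|[->|[->|[->| -> ]]]]]]] by lia;
    [destruct (mod3 k) as [E|[E|E]]|..]; gs; pick6.
  - intro j.
    assert ((j <= -7 \/ 7 <= j) \/ j = -6 \/ j = -5 \/ j = -4 \/ j = -3 \/ j = -2 \/ j = -1 \/ j = 0
            \/ j = 1 \/ j = 2 \/ j = 3 \/ j = 4 \/ j = 5 \/ j = 6)%Z
      as [Hk|[->|[->|[->|[->|[->|[->|[->|[->|[->|[->|[->|[->| -> ]]]]]]]]]]]]] by lia;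
    [destruct (mod3 j) as [E|[E|E]]|..]; gs; pick4.
  - intros d hd H.
    pose proof (H (- Z.of_nat d)%Z) as H1.
    pose proof (H (-2 * Z.of_nat d)%Z) as H2.
    pose proof (H (-3 * Z.of_nat d)%Z) as H3.
    replace (- Z.of_nat d + Z.of_nat d)%Z with 0%Z in H1 by lia.
    replace (-2 * Z.of_nat d + Z.of_nat d)%Z with (- Z.of_nat d)%Z in H2 by lia.
    replace (-3 * Z.of_nat d + Z.of_nat d)%Z with (-2 * Z.of_nat d)%Z in H3 by lia.
    assert (E : (((-3) * Z.of_nat d) mod 3 = 0)%Z).
    { replace ((-3) * Z.of_nat d)%Z with ((- Z.of_nat d) * 3)%Z by ring. apply Z_mod_mult. }
    rewrite (g0 b c 0%Z) in H1 by lia.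
    rewrite (gb0 b c (-3 * Z.of_nat d)%Z) in H3 by (auto; lia).
    lra.
Qed.

Lemma not_periodic_of g : (forall d : nat, (1 <= d)%nat -> ~ (forall j, g (j + Z.of_nat d)%Z = g j)) ->
  ~ periodic (fun j => Some (g j)).
Proof.
  intros H [d [hd P]]. apply (H d hd). intro j. specialize (P j). congruence.
Qed.

Lemma counter b c : 0 < b -> 0 < c -> (2 * b < c \/ 2 * c < b) ->
  exists y, trop_seq y /\ satisfies (coef b c) y /\ minimal (coef b c) y /\ ~ periodic y.
Proof.
  intros hb hc [h|h].
  - destruct (constr b c hb h) as [g [HW [HM HP]]].
    exists (fun j => Some (g j)). split; [exists 0%Z; discriminate|].
    split; [apply W_sat; exact HW|]. split; [apply M_min; exact HM|].
    apply not_periodic_of; exact HP.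
  - destruct (constr c b hc h) as [G [HW [HM HP]]].
    exists (fun j => Some (G (- j)%Z)). split; [exists 0%Z; discriminate|].
    split; [|split].
    + apply W_sat. intro k. apply W_rev.
      pose proof (HW (- (k + 3))%Z) as H.
      replace (- (k + 3) + 1)%Z with (- (k + 2))%Z in H by lia.
      replace (- (k + 3) + 2)%Z with (- (k + 1))%Z in H by lia.
      replace (- (k + 3) + 3)%Z with (- k)%Z in H by lia.
      exact H.
    + apply M_min. intro j. apply M_rev.
      pose proof (HM (- j)%Z) as H.
      replace (- j - 3)%Z with (- (j + 3))%Z in H by lia.
      replace (- j - 2)%Z with (- (j + 2))%Z in H by lia.
      replace (- j - 1)%Z with (- (j + 1))%Z in H by lia.
      replace (- j + 1)%Z with (- (j - 1))%Z in H by lia.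
      replace (- j + 2)%Z with (- (j - 2))%Z in H by lia.
      replace (- j + 3)%Z with (- (j - 3))%Z in H by lia.
      exact H.
    + apply (not_periodic_of (fun j => G (- j)%Z)). intros d hd P.
      apply (HP d hd). intro m. specialize (P (- (m + Z.of_nat d))%Z).
      replace (- (m + Z.of_nat d) + Z.of_nat d)%Z with (- m)%Z in P by lia.
      replace (- - (m + Z.of_nat d))%Z with (m + Z.of_nat d)%Z in P by lia.
      replace (- - m)%Z with m in P by lia. symmetry. exact P.
Qed.

Theorem proposition2 (b c : R) (hb : 0 < b) (hc : 0 < c) (hbc : b <> c) :
  ((forall y : Z -> Rinf,
      trop_seq y -> satisfies (coef b c) y -> minimal (coef b c) y -> periodic y)
   <-> ((b < c /\ c <= 2 * b) \/ (c < b /\ b <= 2 * c)))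
  /\
  (((b < c /\ c <= 2 * b) \/ (c < b /\ b <= 2 * c)) ->
   forall y : Z -> Rinf,
     trop_seq y -> satisfies (coef b c) y -> minimal (coef b c) y ->
     periodic_with 3 y).
Proof.
  assert (P2 : ((b < c /\ c <= 2 * b) \/ (c < b /\ b <= 2 * c)) ->
   forall y : Z -> Rinf,
     trop_seq y -> satisfies (coef b c) y -> minimal (coef b c) y ->
     periodic_with 3 y).
  { intros h. apply partA. split; [exact hb| split; [exact hc| exact h]]. }
  split; [split|exact P2].
  - intros H.
    destruct (Rle_or_lt c (2 * b)); destruct (Rle_or_lt b (2 * c));
      destruct (Rtotal_order b c) as [?|[?|?]]; try (left; lra); try (right; lra); try lra;
      exfalso;
      (destruct (counter b c hb hc ltac:(lra)) as [y [T [Sa [Mi NP]]]]; exact (NP (H y T Sa Mi))).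
  - intros h y T Sa Mi. exists 3%nat. exact (P2 h y T Sa Mi).
Qed.
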